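(* Let $A$ be a Leibniz algebra over $k$ with $\mathrm{Ann}(A)=0$ or $[A,A]=A$. Then the action of $\mathrm{Bider}(A)$ on $A$ is an action of Leibniz algebras, the homomorphism $A\to\mathrm{Bider}(A)$, $a\mapsto([-,a],[a,-])$, is an actor of $A$, and $\mathfrak{B}(A)\cong\mathrm{Bider}(A)=\mathrm{Actor}(A)$.
   Context: $k$ is a commutative ring with unit. A Leibniz algebra is a $k$-module with a bilinear bracket satisfying $[x,[y,z]]=[[x,y],z]-[[x,z],y]$. $\mathrm{Ann}(A)=\{a\in A:[a,x]=[x,a]=0\ \forall x\in A\}$ and $[A,A]$ is the $k$-submodule spanned by all brackets. An action of a Leibniz algebra $B$ on $A$ is a pair of bilinear maps $B\times A\to A$, $(b,a)\mapsto[b,a]$, and $A\times B\to A$, $(a,b)\mapsto[a,b]$, such that for all $a,a_1,a_2\in A$, $b,b_1,b_2\in B$: $[a_1,[a_2,b]]=[[a_1,a_2],b]-[[a_1,b],a_2]$; $[a_1,[b,a_2]]=[[a_1,b],a_2]-[[a_1,a_2],b]$; $[b,[a_1,a_2]]=[[b,a_1],a_2]-[[b,a_2],a_1]$; $[a,[b_1,b_2]]=[[a,b_1],b_2]-[[a,b_2],b_1]$; $[b_1,[a,b_2]]=[[b_1,a],b_2]-[[b_1,b_2],a]$; $[b_1,[b_2,a]]=[[b_1,b_2],a]-[[b_1,a],b_2]$. A crossed module of Leibniz algebras is a homomorphism $\partial:A\to G$ with an action of $G$ on $A$ such that $\partial[g,a]=[g,\partial a]$, $\partial[a,g]=[\partial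 a,g]$, $[\partial a,a']=[a,a']$, $[a',\partial a]=[a',a]$. An actor of $A$ is a crossed module $\partial:A\to\mathrm{Actor}(A)$ such that for every Leibniz algebra $C$ with an action on $A$ there is a unique homomorphism $\varphi:C\to\mathrm{Actor}(A)$ with $[\varphi(c),a]=[c,a]$, $[a,\varphi(c)]=[a,c]$ for all $c\in C$, $a\in A$. Biderivations: $\mathrm{Bider}(A)$ is the set of pairs $\varphi=([-,\varphi],[\varphi,-])$ of $k$-linear maps $A\to A$ with $[[a_1,a_2],\varphi]=[a_1,[a_2,\varphi]]+[[a_1,\varphi],a_2]$, $[\varphi,[a_1,a_2]]=[[\varphi,a_1],a_2]-[[\varphi,a_2],a_1]$, $[a_1,[a_2,\varphi]]=-[a_1,[\varphi,a_2]]$. It is a $k$-module componentwise, with bracket $[\varphi,\varphi']$ given by $[a,[\varphi,\varphi']]=[[a,\varphi],\varphi']-[[a,\varphi'],\varphi]$ and $[[\varphi,\varphi'],a]=[\varphi,[\varphi',a]]+[[\varphi,a],\varphi']$, and acts on $A$ by $(\varphi,a)\mapsto[\varphi,a]$, $(a,\varphi)\mapsto[a,\varphi]$. Construction of $\mathfrak{B}(A)$: let $(B_j)_{j\in J}$ range over all Leibniz algebras with an action on $A$ (one index per action). For $b\in B_j$ let $\mathbf b$ be the pair of $k$-linear maps $a\mapsto[a,b]$, $a\mapsto[b,a]$. On pairs $x=([-,x],[x,-])$ of $k$-linear maps define addition and scalar multiplication componentwise and the bracket by $[a,[x,y]]=[[a,x],y]-[[a,y],x]$, $[[x,y],a]=[x,[y,a]]+[[x,a],y]$.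 $\mathfrak{B}(A)$ is the set of pairs obtained from all the $\mathbf b$ by iterating these operations. *)

(* Defs.v *)
From HB Require Import structures.
From mathcomp Require Import all_boot all_order all_algebra.
Set Implicit Arguments. Unset Strict Implicit. Unset Printing Implicit Defensive.
Import GRing.Theory.
Local Open Scope ring_scope.

Section Leibniz.
Variable k : comPzRingType.

Definition klinear (M N : lmodType k) (f : M -> N) : Prop :=
  forall (c : k) (x y : M), f (c *: x + y) = c *: f x + f y.

Definition kbilinear (M N O : lmodType k) (f : M -> N -> O) : Prop :=
  (forall x, klinear (f x)) /\ (forall y, klinear (fun x => f x y)).

Definition leibniz_on (M : Type) (S : M -> Prop) (addM : M -> M -> M)
    (oppM : M -> M) (br : M -> M -> M) : Prop :=
  forall x y z, S x -> S y -> S z ->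
    br x (br y z) = addM (br (br x y) z) (oppM (br (br x z) y)).

Definition is_leibniz (M : lmodType k) (br : M -> M -> M) : Prop :=
  kbilinear br /\ leibniz_on (fun _ => True) +%R -%R br.

Definition action_identities (B A : Type) (S : B -> Prop)
    (addA : A -> A -> A) (oppA : A -> A)
    (brB : B -> B -> B) (brA : A -> A -> A)
    (l : B -> A -> A) (r : A -> B -> A) : Prop :=
  (forall a1 a2 b, S b ->
     brA a1 (r a2 b) = addA (r (brA a1 a2) b) (oppA (brA (r a1 b) a2))) /\
  (forall a1 a2 b, S b ->
     brA a1 (l b a2) = addA (brA (r a1 b) a2) (oppA (r (brA a1 a2) b))) /\
  (forall a1 a2 b, S b ->
     l b (brA a1 a2) = addA (brA (l b a1) a2) (oppA (brA (l b a2) a1))) /\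
  (forall a b1 b2, S b1 -> S b2 ->
     r a (brB b1 b2) = addA (r (r a b1) b2) (oppA (r (r a b2) b1))) /\
  (forall a b1 b2, S b1 -> S b2 ->
     l b1 (r a b2) = addA (r (l b1 a) b2) (oppA (l (brB b1 b2) a))) /\
  (forall a b1 b2, S b1 -> S b2 ->
     l b1 (l b2 a) = addA (l (brB b1 b2) a) (oppA (r (l b1 a) b2))).

Definition leibniz_action (B A : lmodType k) (brB : B -> B -> B)
    (brA : A -> A -> A) (l : B -> A -> A) (r : A -> B -> A) : Prop :=
  kbilinear l /\ kbilinear r /\
  action_identities (fun _ => True) +%R -%R brB brA l r.

Variables (A : lmodType k) (br : A -> A -> A).

Definition ann_trivial : Prop :=
  forall a : A, (forall x, br a x = 0 /\ br x a = 0) -> a = 0.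

Definition perfect : Prop :=
  forall a : A, exists (n : nat) (c : 'I_n -> k) (x y : 'I_n -> A),
    a = \sum_(i < n) c i *: br (x i) (y i).

(* Pairs x = ([-,x],[x,-]) of maps A -> A: x.1 a = [a,x], x.2 a = [x,a]. *)
Definition pairA : Type := ((A -> A) * (A -> A))%type.

Definition pzero : pairA := (fun _ => 0, fun _ => 0).
Definition padd (x y : pairA) : pairA :=
  (fun a => x.1 a + y.1 a, fun a => x.2 a + y.2 a).
Definition popp (x : pairA) : pairA := (fun a => - x.1 a, fun a => - x.2 a).
Definition pscale (c : k) (x : pairA) : pairA :=
  (fun a => c *: x.1 a, fun a => c *: x.2 a).
(* [a,[x,y]] = [[a,x],y] - [[a,y],x] ;  [[x,y],a] = [x,[y,a]] + [[x,a],y] *)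
Definition pbr (x y : pairA) : pairA :=
  (fun a => y.1 (x.1 a) - x.1 (y.1 a), fun a => x.2 (y.2 a) + y.1 (x.2 a)).

Definition pl (x : pairA) (a : A) : A := x.2 a.
Definition pr (a : A) (x : pairA) : A := x.1 a.

Definition bider (x : pairA) : Prop :=
  klinear x.1 /\ klinear x.2 /\
  (forall a1 a2, x.1 (br a1 a2) = br a1 (x.1 a2) + br (x.1 a1) a2) /\
  (forall a1 a2, x.2 (br a1 a2) = br (x.2 a1) a2 - br (x.2 a2) a1) /\
  (forall a1 a2, br a1 (x.1 a2) = - br a1 (x.2 a2)).

(* Bider(A) is a Leibniz algebra (k-submodule of pairs, closed under the
   bracket, bracket bilinear and satisfying the Leibniz identity on it)
   and its action on A is an action of Leibniz algebras. *)
Definition bider_leibniz_action : Prop :=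
  bider pzero /\
  (forall x y, bider x -> bider y -> bider (padd x y)) /\
  (forall c x, bider x -> bider (pscale c x)) /\
  (forall x y, bider x -> bider y -> bider (pbr x y)) /\
  (forall c x y z, bider x -> bider y -> bider z ->
     pbr (padd (pscale c x) y) z = padd (pscale c (pbr x z)) (pbr y z) /\
     pbr z (padd (pscale c x) y) = padd (pscale c (pbr z x)) (pbr z y)) /\
  leibniz_on bider padd popp pbr /\
  (forall c x y a, bider x -> bider y ->
     pl (padd (pscale c x) y) a = c *: pl x a + pl y a /\
     pr a (padd (pscale c x) y) = c *: pr a x + pr a y) /\
  (forall x, bider x -> klinear (pl x) /\ klinear (fun a => pr a x)) /\
  action_identities bider +%R -%R pbr br pl pr.

Definition inner (a : A) : pairA := (fun x => br x a, fun x => br a x).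

Definition phom (M : lmodType k) (brM : M -> M -> M) (f : M -> pairA) : Prop :=
  (forall c x y, f (c *: x + y) = padd (pscale c (f x)) (f y)) /\
  (forall x y, f (brM x y) = pbr (f x) (f y)).

Definition inner_crossed_module : Prop :=
  (forall a, bider (inner a)) /\
  phom br inner /\
  (forall g a, bider g -> inner (pl g a) = pbr g (inner a)) /\
  (forall g a, bider g -> inner (pr a g) = pbr (inner a) g) /\
  (forall a a', pl (inner a) a' = br a a') /\
  (forall a a', pr a' (inner a) = br a' a).

Definition actor_universal : Prop :=
  forall (C : lmodType k) (brC : C -> C -> C) (l : C -> A -> A) (r : A -> C -> A),
    is_leibniz brC -> leibniz_action brC br l r ->
    exists phi : C -> pairA,
      ((forall c, bider (phi c)) /\ phom brC phi /\
       (forall c a, pl (phi c) a = l c a /\ pr a (phi c) = r a c)) /\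
      (forall psi : C -> pairA,
        (forall c, bider (psi c)) -> phom brC psi ->
        (forall c a, pl (psi c) a = l c a /\ pr a (psi c) = r a c) ->
        forall c, psi c = phi c).

Inductive frakB : pairA -> Prop :=
  | frakB_gen (B : lmodType k) (brB : B -> B -> B) (l : B -> A -> A)
      (r : A -> B -> A) (b : B) :
      is_leibniz brB -> leibniz_action brB br l r ->
      frakB (fun a => r a b, fun a => l b a)
  | frakB_add x y : frakB x -> frakB y -> frakB (padd x y)
  | frakB_scale c x : frakB x -> frakB (pscale c x)
  | frakB_br x y : frakB x -> frakB y -> frakB (pbr x y).

End Leibniz.

(* Main.v *)
Require Import Defs.
From HB Require Import structures.
From mathcomp Require Import all_boot all_order all_algebra.
From Stdlib Require Import FunctionalExtensionality ProofIrrelevance.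
Set Implicit Arguments. Unset Strict Implicit. Unset Printing Implicit Defensive.
Import GRing.Theory.
Local Open Scope ring_scope.

Ltac pullL a :=
  do 30 try (first [rewrite [in LHS](addrCA _ a _) | rewrite [in LHS](addrC _ a)]).
Ltac zcan :=
  rewrite ?add0r ?addr0 ?oppr0;
  match goal with
  | |- 0 = 0 => reflexivity
  | |- - ?a + _ = 0 => pullL a;
      first [rewrite addNKr | rewrite addrN]
  | |- ?a + _ = 0 => pullL (- a);
      first [rewrite addKr | rewrite addNr]
  end.
Ltac zperm :=
  apply/eqP; rewrite -subr_eq0; apply/eqP;
  rewrite ?opprD ?opprK -?addrA; repeat zcan.

Section Lin.
Variable k : comPzRingType.
Implicit Types M N : lmodType k.

Lemma klinD M N (f : M -> N) : klinear f -> forall x y, f (x + y) = f x + f y.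
Proof. by move=> h x y; have := h 1 x y; rewrite !scale1r. Qed.
Lemma klin0 M N (f : M -> N) : klinear f -> f 0 = 0.
Proof. by move=> h; apply: (addrI (f 0)); rewrite -klinD // !addr0. Qed.
Lemma klinZ M N (f : M -> N) : klinear f -> forall c x, f (c *: x) = c *: f x.
Proof. by move=> h c x; rewrite -[c *: x]addr0 h klin0 // addr0. Qed.
Lemma klinN M N (f : M -> N) : klinear f -> forall x, f (- x) = - f x.
Proof. by move=> h x; rewrite -scaleN1r klinZ // scaleN1r. Qed.
Lemma klinB M N (f : M -> N) : klinear f -> forall x y, f (x - y) = f x - f y.
Proof. by move=> h x y; rewrite klinD // klinN. Qed.
Lemma klin_comp M N (O : lmodType k) (f : M -> N) (g : N -> O) :
  klinear f -> klinear g -> klinear (fun x => g (f x)).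
Proof. by move=> hf hg c x y; rewrite hf hg. Qed.
Lemma klin_add M N (f g : M -> N) :
  klinear f -> klinear g -> klinear (fun x => f x + g x).
Proof.
move=> hf hg c x y; rewrite hf hg scalerDr.
by rewrite -!addrA; congr (_ + _); rewrite addrCA.
Qed.
Lemma klin_opp M N (f : M -> N) : klinear f -> klinear (fun x => - f x).
Proof. by move=> hf c x y; rewrite hf opprD scalerN. Qed.
Lemma klin_scale M N (f : M -> N) d : klinear f -> klinear (fun x => d *: f x).
Proof. by move=> hf c x y; rewrite hf scalerDr !scalerA mulrC. Qed.
End Lin.

Lemma peq (k : comPzRingType) (A : lmodType k) (x y : pairA A) :
  (forall a, x.1 a = y.1 a) -> (forall a, x.2 a = y.2 a) -> x = y.
Proof.
case: x y => [x1 x2] [y1 y2] /= h1 h2.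
by congr pair; apply: functional_extensionality.
Qed.

Section Main.
Variables (k : comPzRingType) (A : lmodType k) (br : A -> A -> A).
Hypothesis HL : is_leibniz br.

Lemma brR x : klinear (br x). Proof. by case: HL => [[]]. Qed.
Lemma brL y : klinear (fun x => br x y). Proof. by case: HL => [[]]. Qed.
Lemma brDr x u v : br x (u + v) = br x u + br x v. Proof. by have := klinD (brR x). Qed.
Lemma brDl y u v : br (u + v) y = br u y + br v y. Proof. by have := klinD (brL y) u v. Qed.
Lemma brNr x u : br x (- u) = - br x u. Proof. by have := klinN (brR x). Qed.
Lemma brNl y u : br (- u) y = - br u y. Proof. by have := klinN (brL y) u. Qed.
Lemma brBr x u v : br x (u - v) = br x u - br x v. Proof. by have := klinB (brR x). Qed.
Lemma brBl y u v : br (u - v) y = br u y - br v y. Proof. by have := klinB (brL y) u v. Qed.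
Lemma br0r x : br x 0 = 0. Proof. by have := klin0 (brR x). Qed.
Lemma br0l y : br 0 y = 0. Proof. exact: klin0 (brL y). Qed.
Lemma brZr x c u : br x (c *: u) = c *: br x u. Proof. by have := klinZ (brR x). Qed.
Lemma brZl y c u : br (c *: u) y = c *: br u y. Proof. by have := klinZ (brL y) c u. Qed.
Lemma leib x y z : br x (br y z) = br (br x y) z - br (br x z) y.
Proof. by case: HL => _ h; apply: h. Qed.
Lemma leib_anti x y z : br x (br y z) = - br x (br z y).
Proof. by rewrite leib (leib x z y) opprB. Qed.

Section Bd.
Variable x : pairA A.
Hypothesis Hx : bider br x.
Lemma bL1 : klinear x.1. Proof. by case: Hx. Qed.
Lemma bL2 : klinear x.2. Proof. by case: Hx => _ []. Qed.
Lemma bD1 a1 a2 : x.1 (br a1 a2) = br a1 (x.1 a2) + br (x.1 a1) a2.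
Proof. by case: Hx => _ [_ [h _]]. Qed.
Lemma bD2 a1 a2 : x.2 (br a1 a2) = br (x.2 a1) a2 - br (x.2 a2) a1.
Proof. by case: Hx => _ [_ [_ [h _]]]. Qed.
Lemma bD3 a1 a2 : br a1 (x.1 a2) = - br a1 (x.2 a2).
Proof. by case: Hx => _ [_ [_ [_ h]]]. Qed.
Lemma bsig a b : br b (x.1 a + x.2 a) = 0.
Proof. by rewrite brDr bD3 addNr. Qed.
Lemma x2R r : (forall b, br b r = 0) ->
  (forall b, br b (x.2 r) = 0) /\ (forall b, br (x.2 r) b = 0).
Proof.
move=> hr; split=> b.
  have := bD1 b r; rewrite hr (klin0 bL1) hr addr0 => h.
  by rewrite -[br b (x.2 r)]opprK -bD3 -h oppr0.
have := bD2 b r; rewrite hr (klin0 bL2) hr sub0r => /eqP.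
by rewrite eq_sym oppr_eq0 => /eqP.
Qed.
End Bd.

Definition Hyp := ann_trivial br \/ perfect br.

Lemma key x y : Hyp -> bider br x -> bider br y ->
  forall a, x.2 (y.1 a + y.2 a) = 0.
Proof.
move=> H hx hy.
case: H => [Hann|Hperf] a.
  apply: Hann => b; have [h1 h2] := x2R hx (fun b => bsig hy a b).
  by split.
pose G a := x.2 (y.1 a + y.2 a).
have GL : klinear G.
  apply: klin_comp (bL2 hx); apply: klin_add; [exact: bL1|exact: bL2].
have Gbr p q : G (br p q) = 0.
  rewrite /G.
  have -> : y.1 (br p q) + y.2 (br p q) =
     br (y.1 p + y.2 p) q - (br p (y.2 q) + br (y.2 q) p).
    rewrite bD1 // bD2 // bD3 // brDl opprD.
    by zperm.
  rewrite (klinB (bL2 hx)) (klinD (bL2 hx)) !bD2 //.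
  have [_ h2] := x2R hx (fun b => bsig hy p b).
  rewrite h2 (bsig hy p) !subr0.
  by rewrite addrA subrK !subrr.
have [n [c [u [v ->]]]] := Hperf a.
rewrite -/(G _).
elim/big_ind: _ => //.
- exact: klin0 GL.
- by move=> s t hs ht; rewrite (klinD GL) hs ht addr0.
- by move=> i _; rewrite (klinZ GL) Gbr scaler0.
Qed.


Lemma x1R x r : bider br x -> (forall b, br b r = 0) -> forall b, br b (x.1 r) = 0.
Proof.
move=> hx hr b; have := bD1 hx b r; rewrite hr (klin0 (bL1 hx)) hr addr0.
by move=> ->.
Qed.

Lemma bider0 : bider br (pzero A).
Proof.
rewrite /bider /pzero /=; split; first by move=> c x y; rewrite scaler0 addr0.
split; first by move=> c x y; rewrite scaler0 addr0.
split; first by move=> *; rewrite br0r br0l addr0.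
split; first by move=> *; rewrite !br0l subr0.
by move=> *; rewrite br0r oppr0.
Qed.

Lemma biderD x y : bider br x -> bider br y -> bider br (padd x y).
Proof.
move=> hx hy; rewrite /bider /padd /=.
split; first exact: klin_add (bL1 hx) (bL1 hy).
split; first exact: klin_add (bL2 hx) (bL2 hy).
split; first by move=> a1 a2; rewrite (bD1 hx) (bD1 hy) brDr brDl; zperm.
split; first by move=> a1 a2; rewrite (bD2 hx) (bD2 hy) !brDl; zperm.
by move=> a1 a2; rewrite !brDr (bD3 hx) (bD3 hy) opprD.
Qed.

Lemma biderZ c x : bider br x -> bider br (pscale c x).
Proof.
move=> hx; rewrite /bider /pscale /=.
split; first exact: klin_scale (bL1 hx).
split; first exact: klin_scale (bL2 hx).
split; first by move=> a1 a2; rewrite (bD1 hx) brZr brZl scalerDr.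
split; first by move=> a1 a2; rewrite (bD2 hx) !brZl scalerBr.
by move=> a1 a2; rewrite !brZr (bD3 hx) scalerN.
Qed.

Lemma biderBr x y : bider br x -> bider br y -> bider br (pbr x y).
Proof.
move=> hx hy; rewrite /bider /pbr /=.
split.
  apply: klin_add; first exact: klin_comp (bL1 hx) (bL1 hy).
  by apply: klin_opp; exact: klin_comp (bL1 hy) (bL1 hx).
split.
  apply: klin_add; first exact: klin_comp (bL2 hy) (bL2 hx).
  exact: klin_comp (bL2 hx) (bL1 hy).
split.
  move=> a1 a2.
  rewrite (bD1 hx) (bD1 hy) (klinD (bL1 hx)) (klinD (bL1 hy)) !(bD1 hx) !(bD1 hy).
  rewrite brBr brBl; zperm.
split.
  move=> a1 a2.
  rewrite (bD2 hy) (klinB (bL2 hx)) !(bD2 hx) (klinB (bL1 hy)) !(bD1 hy).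
  rewrite !brDl !(bD3 hy); zperm.
move=> a1 a2.
have e1 := x1R hy (bsig hx a2) a1.
rewrite (klinD (bL1 hy)) brDr in e1.
have e2 : br a1 (x.2 (y.1 a2)) + br a1 (x.2 (y.2 a2)) = 0.
  apply/eqP; rewrite -oppr_eq0 -brDr -(klinD (bL2 hx)) -(bD3 hx); apply/eqP.
  exact: x1R hx (bsig hy a2) a1.
rewrite brBr !brDr (bD3 hx).
move/eqP: e1; rewrite addr_eq0 => /eqP ->.
move/eqP: e2; rewrite addr_eq0 => /eqP ->.
zperm.
Qed.

Lemma pbr_leib x y z : Hyp -> bider br x -> bider br y -> bider br z ->
  pbr x (pbr y z) = padd (pbr (pbr x y) z) (popp (pbr (pbr x z) y)).
Proof.
move=> H hx hy hz; apply: peq => a /=.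
  rewrite !(klinB (bL1 hx)) !(klinB (bL1 hy)) !(klinB (bL1 hz)); zperm.
have e := key H hx hz (y.2 a).
rewrite (klinD (bL2 hx)) in e.
move/eqP: e; rewrite addr_eq0 => /eqP e.
rewrite ?(klinD (bL2 hx)) ?(klinD (bL1 hz)) ?(klinD (bL1 hy)) ?(klinB (bL1 hy)) ?(klinB (bL1 hz)) e.
zperm.
Qed.

Lemma pbr_linl c x y z : bider br x -> bider br y -> bider br z ->
  pbr (padd (pscale c x) y) z = padd (pscale c (pbr x z)) (pbr y z).
Proof.
move=> hx hy hz; apply: peq => a /=.
  rewrite (bL1 hz) !scalerBr; zperm.
rewrite (bL1 hz) !scalerDr; zperm.
Qed.

Lemma pbr_linr c x y z : bider br x -> bider br y -> bider br z ->
  pbr z (padd (pscale c x) y) = padd (pscale c (pbr z x)) (pbr z y).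
Proof.
move=> hx hy hz; apply: peq => a /=.
  rewrite (bL1 hz) !scalerBr; zperm.
rewrite (bL2 hz) !scalerDr; zperm.
Qed.

Lemma act_ids : Hyp -> action_identities (bider br) +%R -%R (pbr (A:=A)) br (pl (A:=A)) (pr (A:=A)).
Proof.
move=> H; rewrite /action_identities /pl /pr /pbr /=.
split; first by move=> a1 a2 b hb; rewrite (bD1 hb) addrK.
split; first by move=> a1 a2 b hb; rewrite (bD1 hb) (bD3 hb); zperm.
split; first by move=> a1 a2 b hb; rewrite (bD2 hb).
split; first by move=> a b1 b2 h1 h2.
split.
  move=> a b1 b2 h1 h2.
  have e := key H h1 h2 a; rewrite (klinD (bL2 h1)) in e.
  move/eqP: e; rewrite addr_eq0 => /eqP ->; zperm.
by move=> a b1 b2 h1 h2; rewrite addrK.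
Qed.

Lemma bider_leib_act : Hyp -> bider_leibniz_action br.
Proof.
move=> H; split; first exact: bider0.
split; first exact: biderD.
split; first exact: biderZ.
split; first exact: biderBr.
split; first by move=> c x y z hx hy hz; split; [exact: pbr_linl | exact: pbr_linr].
split; first by move=> x y z hx hy hz; exact: pbr_leib.
split; first by [].
split; first by move=> x hx; split; [exact: bL2 | exact: bL1].
exact: act_ids.
Qed.

Lemma bider_inner a : bider br (inner br a).
Proof.
rewrite /bider /inner /=.
split; first exact: brL.
split; first exact: brR.
split; first by move=> a1 a2; rewrite leib; zperm.
split; first by move=> a1 a2; rewrite leib.
by move=> a1 a2; rewrite leib_anti.
Qed.

Lemma inner_cm : inner_crossed_module br.
Proof.
split; first exact: bider_inner.
split.
  split.
    move=> c x y; apply: peq => a /=; first exact: brR.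
    by have := brL a c x y.
  move=> x y; apply: peq => a /=; first exact: leib.
  rewrite leib; zperm.
split.
  move=> g a hg; apply: peq => b /=; rewrite /pl.
    rewrite (bD1 hg) (bD3 hg); zperm.
  rewrite (bD2 hg); zperm.
split.
  move=> g a hg; apply: peq => b /=; rewrite /pr.
    rewrite (bD1 hg); zperm.
  rewrite (bD1 hg) (bD3 hg); zperm.
by split.
Qed.

Lemma bider_of_action (B : lmodType k) (brB : B -> B -> B) l r (b : B) :
  leibniz_action brB br l r -> bider br (fun a => r a b, fun a => l b a).
Proof.
move=> [[hl1 hl2] [[hr1 hr2] [i1 [i2 [i3 _]]]]].
rewrite /bider /=.
split; first exact: hr2.
split; first exact: hl1.
split; first by move=> a1 a2; rewrite i1 //; zperm.
split; first by move=> a1 a2; rewrite i3.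
by move=> a1 a2; rewrite i1 // i2 //; zperm.
Qed.

Lemma actor_univ : actor_universal br.
Proof.
move=> C brC l r _ hact.
exists (fun c => (fun a => r a c, fun a => l c a)).
have hact' := hact.
move: hact' => [[hl1 hl2] [[hr1 hr2] [i1 [i2 [i3 [i4 [i5 i6]]]]]]].
split.
  split; first by move=> c; exact: bider_of_action hact.
  split; last by [].
  split.
    move=> c x y; apply: peq => a /=; first exact: hr1.
    by have := hl2 a c x y.
  move=> x y; apply: peq => a /=; first exact: i4.
  rewrite i6 //; zperm.
move=> psi _ _ h c; apply: peq => a /=.
  by have [_ <-] := h c a.
by have [<- _] := h c a.
Qed.
End Main.

From mathcomp Require Import boolp.

Record bidT (k : comPzRingType) (A : lmodType k) (br : A -> A -> A)
  (HL : is_leibniz br) := BidT { bval : pairA A; bvalP : bider br bval }.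

Section BidT.
Variables (k : comPzRingType) (A : lmodType k) (br : A -> A -> A).
Hypothesis HL : is_leibniz br.

Definition T := bidT HL.
HB.instance Definition _ := gen_eqMixin T.
HB.instance Definition _ := gen_choiceMixin T.

Lemma bid_eq (x y : T) : bval x = bval y -> x = y.
Proof.
case: x y => [x hx] [y hy] /= e; subst y.
by rewrite (proof_irrelevance _ hx hy).
Qed.

Definition bzero : T := BidT HL (bider0 HL).
Definition badd (x y : T) : T := BidT HL (biderD HL (bvalP x) (bvalP y)).
Definition bscale (c : k) (x : T) : T := BidT HL (biderZ HL c (bvalP x)).
Definition bopp (x : T) : T := bscale (-1) x.

Lemma baddA : associative badd.
Proof. by move=> x y z; apply: bid_eq; apply: peq => a /=; rewrite addrA. Qed.
Lemma baddC : commutative badd.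
Proof. by move=> x y; apply: bid_eq; apply: peq => a /=; rewrite addrC. Qed.
Lemma badd0 : left_id bzero badd.
Proof. by move=> x; apply: bid_eq; case: x => [[x1 x2] hx]; apply: peq => a /=; rewrite add0r. Qed.
Lemma baddN : left_inverse bzero bopp badd.
Proof. by move=> x; apply: bid_eq; apply: peq => a /=; rewrite scaleN1r addNr. Qed.

HB.instance Definition _ := GRing.isZmodule.Build T baddA baddC badd0 baddN.

Lemma bscaleA a b (v : T) : bscale a (bscale b v) = bscale (a * b) v.
Proof. by apply: bid_eq; apply: peq => x /=; rewrite scalerA. Qed.
Lemma bscale1 : left_id 1 bscale.
Proof. by move=> x; apply: bid_eq; case: x => [[x1 x2] hx]; apply: peq => a /=; rewrite scale1r. Qed.
Lemma bscaleDr : right_distributive bscale +%R.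
Proof. by move=> c x y; apply: bid_eq; apply: peq => a /=; rewrite scalerDr. Qed.
Lemma bscaleDl (v : T) : {morph bscale^~ v : a b / a + b}.
Proof. by move=> a b; apply: bid_eq; apply: peq => x /=; rewrite scalerDl. Qed.

HB.instance Definition _ := GRing.Zmodule_isLmodule.Build k T bscaleA bscale1 bscaleDr bscaleDl.

Lemma bvalD (x y : T) : bval (x + y) = padd (bval x) (bval y). Proof. by []. Qed.
Lemma bvalZ c (x : T) : bval (c *: x) = pscale c (bval x). Proof. by []. Qed.
Lemma bvalN (x : T) : bval (- x) = popp (bval x).
Proof. by apply: peq => a /=; rewrite scaleN1r. Qed.

Definition brB (x y : T) : T := BidT HL (biderBr HL (bvalP x) (bvalP y)).

Hypothesis H : Hyp br.

Lemma brB_leib : is_leibniz brB.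
Proof.
split; first split.
- move=> x c y z; apply: bid_eq.
  change (pbr (bval x) (padd (pscale c (bval y)) (bval z)) =
    padd (pscale c (pbr (bval x) (bval y))) (pbr (bval x) (bval z))).
  exact: (pbr_linr c (bvalP y) (bvalP z) (bvalP x)).
- move=> x c y z; apply: bid_eq.
  change (pbr (padd (pscale c (bval y)) (bval z)) (bval x) =
    padd (pscale c (pbr (bval y) (bval x))) (pbr (bval z) (bval x))).
  exact: (pbr_linl c (bvalP y) (bvalP z) (bvalP x)).
- move=> x y z _ _ _; apply: bid_eq.
  change (pbr (bval x) (pbr (bval y) (bval z)) =
    padd (pbr (pbr (bval x) (bval y)) (bval z))
         (bval (- brB (brB x z) y))).
  rewrite bvalN.
  exact (pbr_leib HL H (bvalP x) (bvalP y) (bvalP z)).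
Qed.

Lemma brB_act : leibniz_action brB br (fun b a => (bval b).2 a) (fun a b => (bval b).1 a).
Proof.
have [i1 [i2 [i3 [i4 [i5 i6]]]]] := act_ids HL H.
split; first split.
- move=> b; exact: bL2 (bvalP b).
- by move=> a c x y.
split; first split.
- by move=> a c x y.
- move=> b; exact: bL1 (bvalP b).
split; first by move=> a1 a2 b _; exact: i1 (bvalP b).
split; first by move=> a1 a2 b _; exact: i2 (bvalP b).
split; first by move=> a1 a2 b _; exact: i3 (bvalP b).
split; first by move=> a b1 b2 _ _; exact: i4 (bvalP b1) (bvalP b2).
split; first by move=> a b1 b2 _ _; exact: i5 (bvalP b1) (bvalP b2).
by move=> a b1 b2 _ _; exact: i6 (bvalP b1) (bvalP b2).
Qed.

Lemma bider_frakB x : bider br x -> frakB br x.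
Proof.
move=> hx.
have := @frakB_gen k A br T brB (fun b a => (bval b).2 a) (fun a b => (bval b).1 a)
  (BidT HL hx) brB_leib brB_act.
by case: x hx.
Qed.
End BidT.

Lemma frakB_bider (k : comPzRingType) (A : lmodType k) (br : A -> A -> A)
  (HL : is_leibniz br) x : frakB br x -> bider br x.
Proof.
elim.
- by move=> B brB l r b _ hact; exact: bider_of_action hact.
- move=> y z _ hy _ hz; exact (biderD HL hy hz).
- move=> c y _ hy; exact (biderZ HL c hy).
- move=> y z _ hy _ hz; exact (biderBr HL hy hz).
Qed.

Theorem proposition4p8 (k : comPzRingType) (A : lmodType k)
    (br : A -> A -> A) :
  is_leibniz br ->
  (ann_trivial br \/ perfect br) ->
  bider_leibniz_action br /\
  inner_crossed_module br /\
  actor_universal br /\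
  (forall x : pairA A, frakB br x <-> bider br x).
Proof.
move=> HL H.
split; first exact (bider_leib_act HL H).
split; first exact (inner_cm HL).
split; first exact (@actor_univ _ _ br).
move=> x; split; first exact (@frakB_bider _ _ _ HL x).
exact (@bider_frakB _ _ _ HL H x).
Qed.
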